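(* Let $m,k$ be positive integers and suppose $q^mt_1t_2\cdots t_k=1$ (i.e. regard $q,t_1,\ldots,t_{k-1}$ as independent variables and $t_k=q^{-m}(t_1\cdots t_{k-1})^{-1}$). Then $$\sum_{\text{cyclic permutations of }t_1,\ldots,t_k}\ \ \widetilde{\sum_{1\le i_1\le\cdots\le i_k\le m}}\ \left\{\begin{matrix}i_1,\ldots,i_k\\ t_1,\ldots,t_k\end{matrix}\right\}_m=\frac{m^{k-1}}{(k-1)!}.$$ In particular the left side is independent of $q,t_1,\ldots,t_k$.
   Context: $(a)_n:=\prod_{j=0}^{n-1}(1-aq^j)$ (so $(a)_0=1$). For integers $1\le i_1\le\cdots\le i_k\le m$, $$\left\{\begin{matrix}i_1,\ldots,i_k\\ t_1,\ldots,t_k\end{matrix}\right\}_m:=\frac{1}{(q)_{i_1-1}(q^{i_1}t_1)_{i_2-i_1}(q^{i_2}t_1t_2)_{i_3-i_2}\cdots(q^{i_k}t_1\cdots t_k)_{m-i_k}}.$$ For a function $f(i_1,\ldots,i_k)$, $\widetilde{\sum}_{1\le i_1\le\cdots\le i_k\le m}f:=\sum_{1\le i_1\le\cdots\le i_k\le m}f(i_1,\ldots,i_k)/\#\mathrm{Stab}(i_1,\ldots,i_k)$, where $\mathrm{Stab}(i_1,\ldots,i_k)$ is the set of permutations of $\{1,\ldots,k\}$ fixing the tuple (so its order is the product of factorials of the multiplicities). The outer sum runs over the $k$ cyclic rotations $(t_1,\ldots,t_k)\mapsto(t_{j+1},\ldots,t_k,t_1,\ldots,t_j)$, $0\le j<k$,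 applied to the variables in the summand. *)

(* Defs.v *)
From mathcomp Require Import all_boot all_order all_algebra.
Set Implicit Arguments. Unset Strict Implicit. Unset Printing Implicit Defensive.
Import GRing.Theory.
Local Open Scope ring_scope.

Definition qpoch (F : pzRingType) (q a : F) (n : nat) : F :=
  \prod_(j < n) (1 - a * q ^+ j).

(* Denominator of the symbol {i_1..i_k ; t_1..t_k}_m, for an index sequence
   [ii] = [i_1; ...; i_k] (values in 1..m) and [ts] = [t_1; ...; t_k].
   Convention i_{k+1} := m (obtained via the default of nth). *)
Definition symb_den (F : pzRingType) (m : nat) (q : F) (ii : seq nat) (ts : seq F) : F :=
  qpoch q q (nth m ii 0).-1 *
  \prod_(j < size ts)
     qpoch q (q ^+ (nth m ii j) * \prod_(l < j.+1) nth 0 ts l)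
           (nth m ii j.+1 - nth m ii j).

Definition symb (F : fieldType) (m : nat) (q : F) (ii : seq nat) (ts : seq F) : F :=
  (symb_den m q ii ts)^-1.

(* Order of the stabilizer of a tuple: product of factorials of multiplicities *)
Definition stab_card (m : nat) (s : seq 'I_m) : nat :=
  \prod_(x : 'I_m) (count_mem x s)`!.

(* Indices 1 <= i_1 <= ... <= i_k <= m, encoded as s : k.-tuple 'I_m
   (nondecreasing) with i_j = s_j + 1. *)
Definition idx (m : nat) (s : seq 'I_m) : seq nat := map (fun x : 'I_m => (val x).+1) s.

Definition tsum (F : fieldType) (m k : nat) (q : F) (ts : seq F) : F :=
  \sum_(s : k.-tuple 'I_m | sorted leq (map val s))
     ((stab_card s)%:R)^-1 * symb m q (idx s) ts.

Definition cyc_tsum (F : fieldType) (m k : nat) (q : F) (ts : seq F) : F :=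
  \sum_(j < k) tsum m k q (rot j ts).

(* Main.v *)
Require Import Defs.
From mathcomp Require Import all_boot all_order all_algebra.
From mathcomp Require Import zify ring.
Set Implicit Arguments. Unset Strict Implicit. Unset Printing Implicit Defensive.
Import GRing.Theory.
Local Open Scope ring_scope.

Local Close Scope ring_scope.
Lemma sum_count_mem (T : finType) (s : seq T) : \sum_(x : T) count_mem x s = size s.
Proof.
elim: s => [|y s IH] /=; first by rewrite big1.
rewrite big_split /= IH (bigD1 y) //= eqxx big1 ?addn0 // => x /negPf.
by rewrite eq_sym => ->.
Qed.

Lemma sum_undup_count (T : finType) (s : seq T) :
  \sum_(x <- undup s) count_mem x s = size s.
Proof.
rewrite big_uniq ?undup_uniq // -sum_count_mem [RHS](bigID (mem (undup s))) /=.
by rewrite [X in _ = _ + X]big1 ?addn0 // => x; rewrite mem_undup => /count_memPn.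
Qed.

Lemma stab_rem m (s : seq 'I_m) x : x \in s ->
  stab_card s = (count_mem x s * stab_card (rem x s))%N.
Proof.
move=> xs; rewrite /stab_card (bigD1 x) //= [in RHS](bigD1 x) //= mulnA.
congr (_ * _)%N.
  rewrite count_mem_rem eqxx; have : (0 < count_mem x s)%N by rewrite -has_count has_pred1.
  by case: (count_mem x s) => // n _; rewrite factS subn1.
by apply: eq_bigr => y /negPf yx; rewrite count_mem_rem eq_sym yx subn0.
Qed.

Lemma size_perms_stab m (s : seq 'I_m) :
  (size (permutations s) * stab_card s)%N = (size s)`!.
Proof.
move Dn: (size s) => n; elim: n s Dn => [|n IH] s Dn.
  case: s Dn => // _; rewrite /stab_card big1 //.
rewrite (perm_size (permutationsE _)) ?Dn // size_allpairs_dep sumnE big_map.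
rewrite big_distrl /= (eq_big_seq (fun x => n`! * count_mem x s)%N); last first.
  move=> x; rewrite mem_undup => xs.
  rewrite (stab_rem xs) mulnCA IH; first by rewrite mulnC.
  by rewrite size_rem // Dn.
by rewrite -big_distrr /= sum_undup_count Dn factS mulnC.
Qed.

Lemma card_perm_tuples m k (s : k.-tuple 'I_m) :
  #|[pred t : k.-tuple 'I_m | perm_eq t s]| = size (permutations s).
Proof.
rewrite cardE -(size_map val); apply: perm_size; apply: uniq_perm.
- by rewrite map_inj_uniq ?enum_uniq //; apply: val_inj.
- exact: permutations_uniq.
move=> t; rewrite mem_permutations; apply/mapP/idP => [[u]|ts].
  by rewrite mem_enum /= => ? ->.
have st : size t == k by rewrite (perm_size ts) size_tuple.
by exists (Tuple st); rewrite // mem_enum.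
Qed.

Local Open Scope ring_scope.

Lemma nth_rot (T : Type) (x0 : T) (s : seq T) j l : (j <= size s)%N -> (l < size s)%N ->
  nth x0 (rot j s) l = nth x0 s ((j + l) %% size s).
Proof.
move=> js ls; rewrite /rot nth_cat size_drop.
case: ltnP => h.
  by rewrite nth_drop modn_small //; lia.
rewrite nth_take; last by lia.
have -> : (j + l = (l - (size s - j)) + size s)%N by lia.
by rewrite modnDr modn_small //; lia.
Qed.

Definition tt (F : pzRingType) k (ts : seq F) (l : nat) : F := nth 0 ts (l %% k).
Definition Z (F : pzRingType) k (ts : seq F) (a n : nat) : F := \prod_(l < n) tt k ts (a + l).
Definition cnt m (s : seq 'I_m) (p : nat) : nat := count (fun x : 'I_m => x < p)%N s.
Definition D (F : pzRingType) m k (q : F) (ts : seq F) (j : nat) (s : seq 'I_m) : F :=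
  \prod_(1 <= p < m) (1 - q ^+ p * Z k ts j (cnt s p)).
Arguments D {F} m k q ts j s.

Lemma qpoch_shift (F : comPzRingType) (q T : F) a b :
  qpoch q (q ^+ a * T) (b - a) = \prod_(a <= p < b) (1 - q ^+ p * T).
Proof.
rewrite /qpoch -[in RHS](add0n a) big_addn big_mkord; apply: eq_bigr => i _.
by rewrite exprD; ring.
Qed.

Lemma tele (R : comPzRingType) (g : nat -> nat -> R) (M : nat) (ii : seq nat) (a c0 : nat) :
  sorted leq ii -> all (fun i => a <= i)%N ii -> all (fun i => i <= M)%N ii ->
  \prod_(a <= p < head M ii) g c0 p *
  \prod_(r < size ii) \prod_(nth M ii r <= p < nth M ii r.+1) g (c0 + r.+1)%N p
  = \prod_(a <= p < M) g (c0 + count (fun i => i <= p)%N ii)%N p.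
Proof.
elim: ii a c0 => [|i ii IH] a c0 /=.
  by move=> _ _ _; rewrite big_ord0 mulr1; apply: eq_bigr => p _; rewrite addn0.
move=> pth /andP[ai aii] /andP[iM iiM].
have sii : sorted leq ii by apply: path_sorted pth.
have aii' : all (fun x => i <= x)%N ii by apply: (order_path_min leq_trans pth).
rewrite big_ord_recl /=.
have -> : \prod_(i0 < size ii) \prod_(nth M (i :: ii) (bump 0 i0) <= p < nth M (i :: ii) (bump 0 i0).+1)
      g (c0 + (bump 0 i0).+1)%N p =
   \prod_(r < size ii) \prod_(nth M ii r <= p < nth M ii r.+1) g (c0.+1 + r.+1)%N p.
  by apply: eq_bigr => r _; rewrite /bump /= add1n; apply: eq_bigr => p _; rewrite addSnnS.
rewrite nth0 addn1 IH // [RHS](@big_cat_nat _ _ _ i) //=; congr (_ * _).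
  apply: eq_big_nat => p /andP[_ pi]; have -> : (i <= p)%N = false by rewrite leqNgt pi.
  congr (g _ _); apply/eqP; rewrite add0n -{1}[c0]addn0 eqn_add2l eq_sym -leqn0 leqNgt -has_count; apply/hasPn => x.
  by move/(allP aii') => ix; rewrite -ltnNge (leq_trans pi ix).
apply: eq_big_nat => p /andP[ip _]; rewrite ip; congr (g _ _); lia.
Qed.

Lemma den_eq (F : fieldType) m k (q : F) (ts : seq F) (j : nat) (s : seq 'I_m) :
  size ts = k -> (j <= k)%N -> size s = k -> sorted leq (map val s) ->
  symb_den m q (idx s) (rot j ts) = D m k q ts j s.
Proof.
move=> Hts jk Hs srt.
rewrite /symb_den size_rot Hts.
have sii : size (idx s) = k by rewrite size_map.
have -> : qpoch q q (nth m (idx s) 0).-1 =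
          \prod_(1 <= p < head m (idx s)) (1 - q ^+ p * Z k ts j 0).
  by rewrite -qpoch_shift /Z big_ord0 expr1 !mulr1 subn1 nth0.
have -> : \prod_(j0 < k) qpoch q (q ^+ nth m (idx s) j0 * \prod_(l < j0.+1) nth 0 (rot j ts) l)
     (nth m (idx s) j0.+1 - nth m (idx s) j0) =
  \prod_(r < size (idx s)) \prod_(nth m (idx s) r <= p < nth m (idx s) r.+1)
     (1 - q ^+ p * Z k ts j (0 + r.+1)%N).
  rewrite sii; apply: eq_bigr => r _; rewrite -qpoch_shift add0n; congr (qpoch _ (_ * _) _).
  apply: eq_bigr => l _; rewrite nth_rot ?Hts //; last by have := ltn_ord l; have := ltn_ord r; lia.
rewrite (tele (fun c p => 1 - q ^+ p * Z k ts j c)).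
- rewrite /D; apply: eq_bigr => p _; by rewrite add0n /idx count_map.
- move: srt; rewrite /idx !sorted_map; apply: sub_sorted => x y /=; by rewrite ltnS.
- by apply/allP => x; rewrite /idx => /mapP[y _ ->].
- by apply/allP => x; rewrite /idx => /mapP[y _ ->]; exact: ltn_ord.
Qed.

Lemma lagrange1 (F : fieldType) n (y : 'I_n -> F) : (0 < n)%N -> injective y ->
  (forall i, y i != 0) ->
  \sum_(s < n) (\prod_(p < n | p != s) (1 - y p / y s))^-1 = 1.
Proof.
move=> n0 yinj ynz.
pose P s := \prod_(p < n | p != s) ('X - (y p)%:P).
have Pev s u : (P s).[y u] = \prod_(p < n | p != s) (y u - y p).
  by rewrite horner_prod; apply: eq_bigr => p _; rewrite hornerXsubC.
have Pnz s : (P s).[y s] != 0.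
  rewrite Pev; apply/prodf_neq0 => p ps; rewrite subr_eq0; apply/eqP => /yinj h.
  by move: ps; rewrite h eqxx.
have Psz s : size (P s) = n.
  rewrite size_prod; last by move=> p _; rewrite polyXsubC_eq0.
  rewrite (eq_bigr (fun=> 2%N)); last by move=> p _; rewrite size_XsubC.
  rewrite sum_nat_const cardC1 card_ord; lia.
have Pmon s : (P s)`_n.-1 = 1.
  have := lead_coef_prod_XsubC (index_enum 'I_n) (fun p => p != s) y.
  by rewrite /lead_coef -/(P s) Psz.
pose c s := y s ^+ n.-1 / (P s).[y s].
pose Q := \sum_(s < n) c s *: P s.
have QX : Q - 'X^(n.-1) = 0.
  apply: (@roots_geq_poly_eq0 _ _ [seq y u | u <- enum 'I_n]).
  - apply/allP => x /mapP[u _ ->]; rewrite /root hornerD hornerN hornerXn subr_eq0.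
    rewrite /Q horner_sum (bigD1 u) //= big1 ?addr0.
      by rewrite hornerZ /c mulfVK.
    move=> s su; rewrite hornerZ Pev (bigD1 u) 1?eq_sym //= subrr mul0r mulr0 //.
  - by rewrite map_inj_uniq ?enum_uniq.
  - rewrite size_map size_enum_ord (leq_trans (size_polyD _ _)) // geq_max size_polyN size_polyXn.
    rewrite prednK // leqnn andbT (leq_trans (size_sum _ _ _)) //.
    by apply/bigmax_leqP => s _; rewrite (leq_trans (size_scale_leq _ _)) // Psz.
have : (Q - 'X^(n.-1))`_n.-1 = 0 by rewrite QX coef0.
rewrite coefB coefXn eqxx /Q coef_sum => /eqP; rewrite subr_eq0 => /eqP h.
rewrite -[RHS]/(true%:R) -h.
apply: eq_bigr => s _; rewrite coefZ Pmon mulr1 /c Pev.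
rewrite (eq_bigr (fun p => (y s - y p) / y s)); last first.
  by move=> p _; rewrite mulrBl divff.
rewrite prodf_div prodr_const cardC1 card_ord /= invf_div //.
Qed.



Lemma ZD (F : pzRingType) k (ts : seq F) a n1 n2 :
  Z k ts a (n1 + n2) = Z k ts a n1 * Z k ts (a + n1) n2.
Proof.
rewrite /Z big_split_ord; congr (_ * _); apply: eq_bigr => l _ /=; by rewrite addnA.
Qed.

Lemma Zmod (F : pzRingType) k (ts : seq F) a n : Z k ts (a %% k) n = Z k ts a n.
Proof. by apply: eq_bigr => l _; rewrite /tt modnDml. Qed.

Lemma Zk0 (F : comPzRingType) k (ts : seq F) : size ts = k -> Z k ts 0 k = \prod_(t <- ts) t.
Proof.
move=> Hs; rewrite (big_nth 0) big_mkord Hs; apply: eq_bigr => l _.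
by rewrite /tt add0n modn_small.
Qed.

Lemma ZkS (F : pzRingType) k (ts : seq F) a n : Z k ts (k + a) n = Z k ts a n.
Proof. by rewrite -Zmod modnDl Zmod. Qed.

Lemma Znz (F : fieldType) k (ts : seq F) a n : (0 < k)%N -> size ts = k ->
  \prod_(t <- ts) t != 0 -> Z k ts a n != 0.
Proof.
move=> Hk Hs; rewrite prodf_seq_neq0 => /allP H; apply/prodf_neq0 => l _.
by apply: H; rewrite mem_nth // Hs ltn_pmod.
Qed.

Definition shf m (Hm : (0 < m)%N) (s : nat) (x : 'I_m) : 'I_m :=
  Ordinal (ltn_pmod (x + (m - s)) Hm).

Lemma shfE m (Hm : (0 < m)%N) s (x : 'I_m) : (s <= m)%N ->
  nat_of_ord (shf Hm s x) = if (s <= x)%N then (x - s)%N else (x + (m - s))%N.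
Proof.
move=> sm /=; have xm := ltn_ord x; case: (leqP s x) => h.
  have -> : (x + (m - s) = (x - s) + m)%N by lia.
  by rewrite modnDr modn_small //; lia.
by rewrite modn_small //; lia.
Qed.

Lemma count_lin (T : Type) (a1 a2 a3 a4 : pred T) (s : seq T) :
  (forall x, a1 x + a2 x = a3 x + a4 x)%N ->
  (count a1 s + count a2 s = count a3 s + count a4 s)%N.
Proof.
move=> H; elim: s => //= x s IH.
have := H x; lia.
Qed.

Lemma cnt_shiftA m (Hm : (0 < m)%N) (s : nat) p (tau : seq 'I_m) : (s + p < m)%N ->
  (cnt (map (shf Hm s) tau) p + cnt tau s = cnt tau (s + p))%N.
Proof.
move=> h; rewrite /cnt count_map -[X in _ = X]addn0 -(count_pred0 tau).
apply: count_lin => x /=; have /= -> := @shfE m Hm s x (ltnW (leq_ltn_trans (leq_addr p s) h)).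
have := ltn_ord x; case: (leqP s x) => /= hx; case: ltnP => /= h1; case: ltnP => //= h2; lia.
Qed.

Lemma cnt_shiftB m (Hm : (0 < m)%N) (s : nat) p (tau : seq 'I_m) : (s < m)%N -> (p < m)%N -> (m <= s + p)%N ->
  (cnt (map (shf Hm s) tau) p + cnt tau s = size tau + cnt tau (s + p - m))%N.
Proof.
move=> h1 h2 h3; rewrite /cnt count_map -(count_predT tau) addnC.
apply: count_lin => x /=; have /= -> := @shfE m Hm s x (ltnW h1).
have := ltn_ord x; case: (leqP s x) => /= hx; case: ltnP => /= h4; case: ltnP => //= h5; lia.
Qed.



Lemma rot_prod (R : comPzRingType) m (Hm : (0 < m)%N) (s : 'I_m) (G : nat -> R) :
  \prod_(1 <= p < m) G ((s + p) %% m)%N = \prod_(p < m | p != s) G p.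
Proof.
pose G' (p : nat) := if p == s then 1 else G p.
have sm := ltn_ord s.
transitivity (\prod_(1 <= p < m) G' ((s + p) %% m)%N).
  apply: eq_big_nat => p /andP[p1 pm]; rewrite /G' ifN //.
  case: (ltnP (s + p) m) => h.
    by rewrite modn_small //; lia.
  have -> : (s + p = (s + p - m) + m)%N by lia.
  by rewrite modnDr modn_small; lia.
have E : \prod_(0 <= p < m) G' ((s + p) %% m)%N = \prod_(1 <= p < m) G' ((s + p) %% m)%N.
  by rewrite big_ltn // addn0 modn_small // /G' eqxx mul1r.
rewrite -E big_mkord.
pose h (p : 'I_m) : 'I_m := Ordinal (ltn_pmod (s + p) Hm).
have hinj : injective h.
  move=> a b /(congr1 val) /= /eqP; rewrite eqn_modDl !modn_small // => /eqP ab.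
  exact: val_inj.
rewrite [RHS]big_mkcond [RHS](reindex_inj hinj) /=.
by apply: eq_bigr => p _; rewrite /G' -(inj_eq val_inj) /=; case: eqP.
Qed.

Lemma Dshift (F : fieldType) m k (Hm : (0 < m)%N) (Hk : (0 < k)%N) (q : F) (ts : seq F)
  (tau : seq 'I_m) (j : nat) (s : 'I_m) :
  size ts = k -> size tau = k -> q != 0 -> q ^+ m * \prod_(t <- ts) t = 1 ->
  D m k q ts ((j + cnt tau s) %% k) (map (shf Hm s) tau) =
  \prod_(p < m | p != s) (1 - (q ^+ p * Z k ts 0 (j + cnt tau p)) / (q ^+ s * Z k ts 0 (j + cnt tau s))).
Proof.
move=> Hts Htau q0 Hprod.
have Pnz : \prod_(t <- ts) t != 0.
  by apply/eqP => h; move: Hprod; rewrite h mulr0 => /eqP; rewrite eq_sym oner_eq0.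
have Znz' a n : Z k ts a n != 0 by apply: Znz.
rewrite /D -(rot_prod Hm s (fun p => 1 - (q ^+ p * Z k ts 0 (j + cnt tau p)) / (q ^+ s * Z k ts 0 (j + cnt tau s)))).
apply: eq_big_nat => p /andP[p1 pm].
rewrite Zmod.
set c := cnt tau s; set c' := cnt (map (shf Hm s) tau) p.
have ZE : Z k ts (j + c) c' = Z k ts 0 (j + c + c') / Z k ts 0 (j + c).
  by rewrite (ZD _ _ 0 (j + c) c') add0n mulrAC divff // mul1r.
rewrite ZE; congr (1 - _).
have qn n : q ^+ n != 0 by apply: expf_neq0.
have sm := ltn_ord s.
case: (ltnP (s + p) m) => h.
  rewrite modn_small //.
  have := @cnt_shiftA m Hm s p tau h; rewrite -/c -/c' => e.
  rewrite -addnA (addnC c) e exprD; field; apply/andP; split; by [].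
have := @cnt_shiftB m Hm s p tau (ltn_ord s) pm h; rewrite -/c -/c' Htau => e.
have -> : ((s + p) %% m = s + p - m)%N.
  have -> : (s + p = (s + p - m) + m)%N by lia.
  by rewrite modnDr modn_small; lia.
rewrite -addnA (addnC c) e addnCA (ZD _ _ 0 k) add0n.
have := Zmod k ts k (j + cnt tau (s + p - m)); rewrite modnn => <-.
rewrite Zk0 //.
have eP : \prod_(t <- ts) t = (q ^+ m)^-1.
  by apply: (mulfI (qn m)); rewrite Hprod mulfV.
have eq1 : q ^+ (s + p - m) = q ^+ s * q ^+ p / q ^+ m by rewrite -exprD -[in RHS](subnK h) exprD mulfK.
rewrite eP eq1; field; apply/and3P; split; by [].
Qed.



Definition ordle m : rel 'I_m := fun x y => (x <= y)%N.

Lemma ordle_total m : total (@ordle m).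
Proof. by move=> x y; apply: leq_total. Qed.
Lemma ordle_trans m : transitive (@ordle m).
Proof. by move=> x y z; apply: leq_trans. Qed.
Lemma ordle_anti m : antisymmetric (@ordle m).
Proof. by move=> x y /anti_leq /val_inj. Qed.

Lemma sorted_ordle m (s : seq 'I_m) : sorted leq (map val s) = sorted (@ordle m) s.
Proof. by rewrite sorted_map. Qed.

Lemma D_perm (F : pzRingType) m k (q : F) ts j (s1 s2 : seq 'I_m) :
  perm_eq s1 s2 -> D m k q ts j s1 = D m k q ts j s2.
Proof.
by move=> /permP H; apply: eq_bigr => p _; rewrite /cnt H.
Qed.

Lemma sort_eq_perm m k (t s : k.-tuple 'I_m) : sorted (@ordle m) s ->
  (sort_tuple (@ordle m) t == s) = perm_eq t s.
Proof.
move=> ss; apply/eqP/idP => [<- /=|pts].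
  by rewrite perm_sym perm_sort.
apply: val_inj => /=; apply: (sorted_eq (@ordle_trans m) (@ordle_anti m)) => //.
  exact: sort_sorted (@ordle_total m) _.
by rewrite perm_sort.
Qed.

Lemma natnz (F : fieldType) (HF : [pchar F] =i pred0) n : (0 < n)%N -> n%:R != 0 :> F.
Proof. by move=> n0; rewrite ((pcharf0P F).1 HF n) -lt0n. Qed.

Lemma tsum_eq (F : fieldType) (HF : [pchar F] =i pred0) m k (q : F) (ts : seq F) j :
  size ts = k -> (j <= k)%N ->
  tsum m k q (rot j ts) = (k`!%:R)^-1 * \sum_(t : k.-tuple 'I_m) (D m k q ts j t)^-1.
Proof.
move=> Hts jk.
rewrite (partition_big (fun t : k.-tuple 'I_m => sort_tuple (@ordle m) t)
           (fun s : k.-tuple 'I_m => sorted leq (map val s))); last first.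
  by move=> t _; rewrite sorted_ordle; apply: sort_sorted; apply: ordle_total.
rewrite /tsum big_distrr; apply: eq_bigr => s ss /=.
have ss' : sorted (@ordle m) s by rewrite -sorted_ordle.
rewrite (eq_bigl (fun t : k.-tuple 'I_m => perm_eq t s)); last by move=> t; rewrite sort_eq_perm.
rewrite (eq_bigr (fun _ => (D m k q ts j s)^-1)); last by move=> t /D_perm ->.
have kf : (k`!)%:R != 0 :> F by apply: (natnz HF); apply: fact_gt0.
have sf : (stab_card s)%:R != 0 :> F.
  by apply: (natnz HF); rewrite /stab_card; apply: prodn_gt0 => i; apply: fact_gt0.
have := size_perms_stab s; rewrite size_tuple -card_perm_tuples => e.
have cE : (#|[pred t : k.-tuple 'I_m | perm_eq t s]|)%:R = (k`!)%:R / (stab_card s)%:R :> F.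
  by rewrite -e natrM mulfK.
rewrite sumr_const -[_ *+ #|_|]mulr_natr (_ : #|_| = #|[pred t : k.-tuple 'I_m | perm_eq t s]|); last by apply: eq_card.
rewrite cE /symb (@den_eq F m k) ?size_tuple //.
by rewrite mulrCA mulKf // mulrC.
Qed.



Theorem theorem9p2 (F : fieldType) (HF : [pchar F] =i pred0)
  (m k : nat) (Hm : (0 < m)%N) (Hk : (0 < k)%N)
  (q : F) (ts : k.-tuple F)
  (Hprod : q ^+ m * \prod_(t <- ts) t = 1)
  (Hden : forall (j : 'I_k) (s : k.-tuple 'I_m), sorted leq (map val s) ->
            symb_den m q (idx s) (rot j ts) != 0) :
  cyc_tsum m k q ts = (m ^ k.-1)%:R / (k.-1)`!%:R.
Proof.
have q0 : q != 0.
  apply/eqP => q0; move: Hprod; rewrite q0 expr0n eqn0Ngt Hm mul0r.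
  by move/eqP; rewrite eq_sym oner_eq0.
have Hts : size ts = k := size_tuple ts.
have Dnz (j : nat) (t : k.-tuple 'I_m) : (j < k)%N -> D m k q ts j t != 0.
  move=> jk.
  have pt : perm_eq t (sort (@ordle m) t) by rewrite perm_sym perm_sort.
  rewrite (D_perm _ _ _ _ pt).
  have srt : sorted leq [seq nat_of_ord i | i <- sort (@ordle m) t].
    by rewrite sorted_map; exact: (sort_sorted (@ordle_total m)).
  have := Hden (Ordinal jk) (sort_tuple (@ordle m) t) srt.
  by rewrite (@den_eq F m k) ?size_tuple ?size_sort ?size_tuple ?(ltnW jk).
rewrite /cyc_tsum (eq_bigr (fun j : 'I_k => (k`!%:R)^-1 * \sum_(t : k.-tuple 'I_m) (D m k q ts j t)^-1));
  last by move=> j _; rewrite (tsum_eq HF) // ltnW.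
rewrite -big_distrr /= pair_big /=.
set S := \sum_(x : 'I_k * k.-tuple 'I_m) _.
have shf_inj s : injective (shf Hm s).
  move=> a b /(congr1 val) /= /eqP; rewrite eqn_modDr !modn_small // => /eqP ab.
  exact: val_inj.
pose Phi (s : 'I_m) (x : 'I_k * k.-tuple 'I_m) : 'I_k * k.-tuple 'I_m :=
     (Ordinal (ltn_pmod (x.1 + cnt x.2 s) Hk), map_tuple (shf Hm s) x.2).
have Phi_inj s : injective (Phi s).
  move=> [a t] [b u] [] /= e1 e2.
  have tu : t = u.
    by apply: val_inj; apply: (inj_map (@shf_inj s)).
  subst u; congr pair; apply: val_inj; move: e1 => /eqP.
  by rewrite eqn_modDr !modn_small // => /eqP.
have mS : m%:R * S = (k * m ^ k)%:R :> F.
  transitivity (\sum_(s < m) S); first by rewrite sumr_const card_ord mulr_natl.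
  rewrite (eq_bigr (fun s => \sum_(x : 'I_k * k.-tuple 'I_m) (D m k q ts (Phi s x).1 (Phi s x).2)^-1));
    last by move=> s _; rewrite /S (reindex_inj (Phi_inj s)).
  rewrite exchange_big /= (eq_bigr (fun _ => 1)).
    by rewrite sumr_const card_prod card_ord card_tuple card_ord.
  move=> [j t] _ /=.
  pose Y (p : 'I_m) := q ^+ p * Z k ts 0 (j + cnt t p).
  have Ynz p : Y p != 0.
    have Pnz : \prod_(t <- ts) t != 0.
      by apply/eqP => h; move: Hprod; rewrite h mulr0 => /eqP; rewrite eq_sym oner_eq0.
    by rewrite mulf_neq0 ?expf_neq0 // Znz.
  have DE (s : 'I_m) : D m k q ts ((j + cnt t s) %% k) [seq shf Hm s i0 | i0 <- t] =
       \prod_(p < m | p != s) (1 - Y p / Y s).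
    by rewrite (@Dshift F m k Hm Hk q ts t j s) ?size_tuple.
  rewrite (eq_bigr (fun s : 'I_m => (\prod_(p < m | p != s) (1 - Y p / Y s))^-1)); last by move=> s _; rewrite DE.
  apply: lagrange1 => // a b eab; apply/eqP; apply/negPn/negP => nab.
  have := Dnz ((j + cnt t b) %% k)%N (map_tuple (shf Hm b) t) (ltn_pmod _ Hk).
  rewrite /= DE (bigD1 a) //= eab divff // subrr mul0r.
  by rewrite eqxx.
have mnz : m%:R != 0 :> F by apply: (natnz HF).
have SE : S = (k * m ^ k)%:R / m%:R by rewrite -mS mulrC mulKf.
have fE : k`! = (k * k.-1`!)%N by rewrite -{1}(prednK Hk) factS prednK.
have pE : (m ^ k = m * m ^ k.-1)%N by rewrite -{1}(prednK Hk) expnS.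
have knz : k%:R != 0 :> F by apply: (natnz HF).
have fnz : (k.-1)`!%:R != 0 :> F by apply: (natnz HF); apply: fact_gt0.
rewrite SE fE pE !natrM; field.
by rewrite mnz knz fnz.
Qed.
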